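(* Let $f:\{0,1\}^n\to\{0,1\}$ be symmetric, $c\in\mathbb{R}^n_{\ge0}$ any cost vector, $\varepsilon\in(0,0.5]$ and $\beta>0$. Then the online algorithm Warmup-IPRR$(f,\varepsilon)$ with unit investment $\beta$ is an $\varepsilon$-error algorithm with expected cost at most \[ \beta n+\mathrm{opt}^{\mathrm{avg}}_0(f,c)\cdot O\!\left(\log\frac1\varepsilon\right), \] where $O(\cdot)$ hides an absolute constant.
   Context: $f$ is symmetric if $f(x)=f(y)$ whenever $\sum_ix_i=\sum_iy_i$. Online priced query model: $f$ is given; input $x$ and costs $c$ unknown; investments $\theta$ start at $0$, each step one $\theta_i$ increases by $\beta$; $x_i$ is revealed once $\theta_i\ge c_i$; cost is $\|\theta\|_1$ at halting; expected cost is over uniform $x\in\{0,1\}^n$. An algorithm is $\varepsilon$-error if $\Pr_x[\text{output}\ne f(x)]\le\varepsilon$. $\mathrm{opt}^{\mathrm{avg}}_0(f,c)$ is the infimum of expected cost over all zero-error algorithms (offline ones know $c$ and pay $c_i$ per revealed $x_i$). $\mathrm{Inf}_i[g]=\Pr_x[g(x)\ne g(x^{\oplus i})]$; for a restriction $\pi$, $f_\pi$ is the restricted function; $\mathrm{bias}(g)=\min\{\Pr_x[g\ne0],\Pr_x[g\ne1]\}$. Warmup-IPRR$(f,\varepsilon)$: start with $\theta=0,\pi=\emptyset$; while $\mathrm{bias}(f_\pi)>\varepsilon$: pick $i^*\in\arg\max_i\mathrm{Inf}_i[f_\pi]/\theta_i$, increase $\theta_{i^*}$ by $\beta$, and if $x_{i^*}$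 is revealed as $b$ add $x_{i^*}\mapsto b$ to $\pi$; output $\mathbf{1}\{\mathbb{E}_x[f_\pi(x)]\ge1/2\}$. *)

(* Defs.v *)
From HB Require Import structures.
From mathcomp Require Import all_boot all_order all_algebra.
From mathcomp Require Import boolp classical_sets reals exp.
Set Implicit Arguments. Unset Strict Implicit. Unset Printing Implicit Defensive.
Import Order.TTheory GRing.Theory Num.Theory.
Local Open Scope ring_scope.
Local Open Scope classical_set_scope.

Definition cube (n : nat) := {ffun 'I_n -> bool}.

Definition prob (R : realType) (n : nat) (P : pred (cube n)) : R :=
  #|[set y : cube n | P y]|%:R / (2 ^ n)%N%:R.
Definition avg (R : realType) (n : nat) (g : cube n -> R) : R :=
  (\sum_(x : cube n) g x) / (2 ^ n)%N%:R.

Definition symmetric_fn (n : nat) (f : cube n -> bool) : Prop :=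
  forall x y : cube n, (\sum_i nat_of_bool (x i) = \sum_i nat_of_bool (y i))%N -> f x = f y.

Definition restrict (n : nat) (f : cube n -> bool) (pi : {ffun 'I_n -> option bool}) : cube n -> bool :=
  fun y => f [ffun i => if pi i is Some b then b else y i].

Definition flip (n : nat) (y : cube n) (i : 'I_n) : cube n :=
  [ffun j => if j == i then ~~ y j else y j].

Definition Inf (R : realType) (n : nat) (g : cube n -> bool) (i : 'I_n) : R :=
  prob R (fun y => g y != g (flip y i)).

Definition bias (R : realType) (n : nat) (g : cube n -> bool) : R :=
  Num.min (prob R (fun y => g y != false)) (prob R (fun y => g y != true)).

(* i in argmax_j Inf_j / theta_j, with the convention a/0 = +oo for a > 0
   (stated by cross-multiplication; meaningful for theta >= 0). *)
Definition is_argmax (R : realType) (n : nat) (g : cube n -> bool)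
    (theta : {ffun 'I_n -> R}) (i : 'I_n) : Prop :=
  0 < Inf R g i /\ forall j, Inf R g j * theta i <= Inf R g i * theta j.

Record state (R : realType) (n : nat) := State {
  st_theta : {ffun 'I_n -> R};
  st_pi : {ffun 'I_n -> option bool};
  st_hist : seq 'I_n }.

Definition init_state (R : realType) (n : nat) : state R n :=
  State [ffun _ => 0] [ffun _ => None] [::].

(* tie-breaking rule: may depend only on what the algorithm has observed *)
Definition selector (R : realType) (n : nat) :=
  {ffun 'I_n -> R} -> {ffun 'I_n -> option bool} -> seq 'I_n -> option 'I_n.

Definition pick_ok (R : realType) (n : nat) (f : cube n -> bool) (eps : R)
    (pick : selector R n) : Prop :=
  forall (theta : {ffun 'I_n -> R}) (pi : {ffun 'I_n -> option bool}) (h : seq 'I_n),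
    (forall i, 0 <= theta i) -> eps < bias R (restrict f pi) ->
    exists i, pick theta pi h = Some i /\ is_argmax (restrict f pi) theta i.

Inductive iprr_step (R : realType) (n : nat) (f : cube n -> bool) (c : 'I_n -> R)
    (eps beta : R) (pick : selector R n) (x : cube n) : state R n -> state R n -> Prop :=
| IprrStep (s : state R n) (i : 'I_n) :
    eps < bias R (restrict f (st_pi s)) ->
    pick (st_theta s) (st_pi s) (st_hist s) = Some i ->
    iprr_step f c eps beta pick x s
      (State [ffun j => if j == i then st_theta s j + beta else st_theta s j]
             (if c i <= st_theta s i + beta
              then [ffun j => if j == i then Some (x i) else st_pi s j]
              else st_pi s)
             (rcons (st_hist s) i)).

Inductive iprr_reach (R : realType) (n : nat) (f : cube n -> bool) (c : 'I_n -> R)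
    (eps beta : R) (pick : selector R n) (x : cube n) : state R n -> state R n -> Prop :=
| IprrRefl s : iprr_reach f c eps beta pick x s s
| IprrTrans s1 s2 s3 : iprr_step f c eps beta pick x s1 s2 ->
    iprr_reach f c eps beta pick x s2 s3 -> iprr_reach f c eps beta pick x s1 s3.

Definition halted (R : realType) (n : nat) (f : cube n -> bool) (eps : R) (s : state R n) : Prop :=
  bias R (restrict f (st_pi s)) <= eps.

Definition iprr_output (R : realType) (n : nat) (f : cube n -> bool) (s : state R n) : bool :=
  (1 / 2 : R) <= prob R (restrict f (st_pi s)).

Definition iprr_cost (R : realType) (n : nat) (s : state R n) : R :=
  \sum_i st_theta s i.

(* offline algorithms: adaptive decision trees, paying c_i per query *)
Inductive dtree (n : nat) := Leaf of bool | Query of 'I_n & dtree n & dtree n.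

Fixpoint dt_eval (n : nat) (t : dtree n) (x : cube n) : bool :=
  match t with
  | Leaf b => b
  | Query i t0 t1 => if x i then dt_eval t1 x else dt_eval t0 x
  end.

Fixpoint dt_cost (R : realType) (n : nat) (c : 'I_n -> R) (t : dtree n) (x : cube n) : R :=
  match t with
  | Leaf _ => 0
  | Query i t0 t1 => c i + (if x i then dt_cost c t1 x else dt_cost c t0 x)
  end.

Definition opt_avg_0 (R : realType) (n : nat) (f : cube n -> bool) (c : 'I_n -> R) : R :=
  inf [set r : R | exists t : dtree n,
          (forall x, dt_eval t x = f x) /\ r = avg (dt_cost c t)].

(* Main.v *)
Require Import Defs.
From HB Require Import structures.
From mathcomp Require Import all_boot all_order all_algebra all_fingroup.
From mathcomp Require Import boolp classical_sets reals exp sequences.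
From mathcomp Require Import finset fintype.
From mathcomp Require Import ring lra zify.
Import Order.TTheory GRing.Theory Num.Theory.
Local Open Scope ring_scope.
Set Implicit Arguments. Unset Strict Implicit. Unset Printing Implicit Defensive.

Section Sym.
Variables (R : realType) (n : nat) (f : cube n -> bool).
Hypothesis fsym : symmetric_fn f.

Lemma probE (P : pred (cube n)) : prob R P = #|[set y | P y]|%:R / (2 ^ n)%N%:R.
Proof.
rewrite /prob; congr (_%:R / _); apply: eq_card => y.
rewrite inE; apply/idP/idP; [by move/set_mem | by move=> H; apply: mem_set].
Qed.

Definition ext (pi : {ffun 'I_n -> option bool}) (z : cube n) : cube n :=
  [ffun i => if pi i is Some b then b else z i].

Lemma restrictE pi z : restrict f pi z = f (ext pi z).
Proof. by []. Qed.

Definition permc (s : {perm 'I_n}) (y : cube n) : cube n := [ffun k => y (s k)].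

Lemma f_perm s y : f (permc s y) = f y.
Proof.
apply: fsym; rewrite [in RHS](reindex_inj (@perm_inj _ s)) /=.
by apply: eq_bigr => i _; rewrite ffunE.
Qed.

Lemma permc_inj s : injective (permc s).
Proof.
move=> y1 y2 /ffunP H; apply/ffunP => k.
by have := H (s^-1 k)%g; rewrite !ffunE permKV.
Qed.


Lemma Inf_revealed (pi : {ffun 'I_n -> option bool}) (i : 'I_n) b : pi i = Some b -> Inf R (restrict f pi) i = 0.
Proof.
move=> Hi; rewrite /Inf probE.
apply/eqP; rewrite mulf_eq0; apply/orP; left; rewrite pnatr_eq0 cards_eq0.
apply/eqP/setP => y; rewrite !inE /restrict.
suff -> : [ffun i0 => if pi i0 is Some b then b else flip y i i0] =
          [ffun i0 => if pi i0 is Some b then b else y i0] by rewrite eqxx.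
apply/ffunP => j; rewrite !ffunE.
case: eqP => [->|_]; first by rewrite Hi.
by case: (pi j).
Qed.

Lemma Inf_sym (pi : {ffun 'I_n -> option bool}) (i j : 'I_n) : pi i = None -> pi j = None ->
  Inf R (restrict f pi) i = Inf R (restrict f pi) j.
Proof.
move=> Hi Hj; rewrite /Inf !probE; congr (_%:R / _).
set t := tperm i j.
have Hpt : forall k, pi (t k) = pi k.
  by move=> k; rewrite /t; case: tpermP => [->|->|]; rewrite ?Hi ?Hj.
have Hg : forall y, restrict f pi (permc t y) = restrict f pi y.
  move=> y; rewrite /restrict -[in RHS](f_perm t); congr f.
  by apply/ffunP => k; rewrite !ffunE Hpt.
have Hfl : forall y, flip (permc t y) i = permc t (flip y j).
  move=> y; apply/ffunP => k; rewrite !ffunE.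
  have -> : (t k == j) = (k == i).
    by rewrite -{1}(tpermL i j) -/t (inj_eq (@perm_inj _ t)).
  by [].
rewrite -(card_preimset _ (@permc_inj t)); apply: eq_card => y.
by rewrite !inE Hfl !Hg.
Qed.

End Sym.


Section Cher.
Variables (R : realType) (n : nat).

Definition cntU (U : {set 'I_n}) (z : cube n) (b : bool) : nat := #|[set i in U | z i == b]|.

Lemma card_sumR (T : finType) (A : {set T}) : (#|A|%:R : R) = \sum_(z : T) (if z \in A then 1 else 0).
Proof. by rewrite -big_mkcond /= sumr_const. Qed.

Lemma chernoff (U : {set 'I_n}) (b : bool) (d : nat) :
  (#|[set z : cube n | (cntU U z b < d)%N]|%:R : R) <=
    2 ^+ d * (3/4) ^+ #|U| * (2 ^ n)%N%:R.
Proof.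
pose F (i : 'I_n) (bb : bool) : R := if (i \in U) && (bb == b) then 1/2 else 1.
have step1 : forall z : cube n, (1/2 : R) ^+ cntU U z b = \prod_i F i (z i).
  move=> z; rewrite /cntU -prodr_const big_mkcond /=.
  by apply: eq_bigr => i _; rewrite /F inE.
rewrite card_sumR.
apply: (@le_trans _ _ (\sum_(z : cube n) 2 ^+ d * (1/2 : R) ^+ cntU U z b)).
  apply: ler_sum => z _; rewrite inE.
  case: ltnP => H.
    rewrite -(subnK (ltnW H)) exprD -mulrA -exprMn.
    rewrite (_ : (2 : R) * (1/2) = 1); last by rewrite mul1r divff // pnatr_eq0.
    by rewrite expr1n mulr1 exprn_ege1 // ler1n.
  by rewrite mulr_ge0 // exprn_ge0 // divr_ge0.
rewrite -mulr_sumr -mulrA ler_pM2l ?exprn_gt0 //.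
under eq_bigr => z _ do rewrite step1.
rewrite -(bigA_distr_bigA (fun i bb => F i bb)) /=.
have step2 : forall i, \sum_(bb : bool) F i bb = if i \in U then 3/2 else 2.
  move=> i; rewrite big_bool /F /=; case: (i \in U) => /=; last by [].
  by case: (b) => /=; field.
under eq_bigr => i _ do rewrite step2.
rewrite (bigID (fun i => i \in U)) /=.
under eq_bigr => i Hi do rewrite Hi.
under [X in _ * X <= _]eq_bigr => i Hi do rewrite (negbTE Hi).
rewrite !prodr_const.
have Hc : (#|[pred i | i \notin U]| = n - #|U|)%N.
  have H := cardsC U; rewrite card_ord in H.
  have H2 : #|[pred i | i \notin U]| = #|~: U| by apply: eq_card => i; rewrite !inE.
  rewrite H2; lia.
rewrite Hc.
have -> : (2 ^ n)%N%:R = (2 : R) ^+ #|U| * 2 ^+ (n - #|U|).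
  rewrite -exprD subnKC; first by rewrite natrX.
  by rewrite -[X in (_ <= X)%N](card_ord n) max_card.
rewrite mulrA -exprMn.
have -> : (3 / 4 * 2 : R) = 3/2 by field.
have -> : #|[pred i | i \in U]| = #|U| by apply: eq_card.
by [].
Qed.

End Cher.


Lemma numeric (R : realType) (eps : R) (d m : nat) : 0 < eps -> eps <= 1/2 -> (1 <= d)%N ->
  eps < 2 * 2 ^+ d * (3/4) ^+ m -> m%:R <= 12 * ln (1/eps) * d%:R.
Proof.
move=> e0 e1 d1 H.
set L := ln (1/eps).
have ie0 : 0 < 1/eps by rewrite divr_gt0.
have EL : expR L = 1/eps by rewrite /L lnK // posrE.
have h2 : (2 : R) <= expR L.
  rewrite EL ler_pdivlMr // ; lra.
have L0 : 0 <= L by rewrite /L ln_ge0 // ler_pdivlMr //; lra.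
have h34 : (3/4 : R) <= expR (-1/4).
  by have := expR_ge1Dx (-1/4 : R); lra.
have Heps : eps = expR (- L) by rewrite expRN EL; field; lra.
have : expR (- L) < expR (L + d%:R * L + m%:R * (-1/4)).
  rewrite -Heps (lt_le_trans H) // !expRD !expRM_natl.
  apply: ler_pM; first by rewrite mulr_ge0 // exprn_ge0.
  - by rewrite exprn_ge0 //; lra.
  - apply: ler_pM => //; first by rewrite exprn_ge0.
    by apply: lerXn2r => //; rewrite nnegrE ?ltW ?expR_gt0 //.
  - by apply: lerXn2r => //; rewrite nnegrE ?ltW ?expR_gt0 //; lra.
rewrite ltr_expR => H2.
have d1' : (1 : R) <= d%:R by rewrite ler1n.
nra.
Qed.


Section Key.
Variables (R : realType) (n : nat) (f : cube n -> bool).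
Hypothesis fsym : symmetric_fn f.
Variables (pi : {ffun 'I_n -> option bool}) (x : cube n) (Q : {set 'I_n}).
Hypothesis Hcons : forall i b, pi i = Some b -> x i = b.
Hypothesis Hcert : forall y : cube n, (forall i, i \in Q -> y i = x i) -> f y = f x.

Definition UU : {set 'I_n} := [set i | pi i == None].
Definition qq (b : bool) : nat := #|[set i in Q :&: UU | x i == b]|.
Definition DD (z : cube n) : {set 'I_n} := [set i in Q :&: UU | z i != x i].

Lemma base_case z : DD z = set0 -> f (ext pi z) = f x.
Proof.
move=> H0; apply: Hcert => i iQ; rewrite ffunE.
case E: (pi i) => [b|]; first by rewrite (Hcons E).
apply/eqP; apply: contraT => Hne.
have : i \in DD z by rewrite inE Hne inE iQ inE E.
by rewrite H0 inE.
Qed.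

Lemma swap_lemma z : (forall b, (qq b <= cntU UU z b)%N) -> f (ext pi z) = f x.
Proof.
move: {2}#|DD z| (leqnn #|DD z|) => k.
elim: k z => [|k IH] z Hk Hq.
  by apply: base_case; apply/eqP; rewrite -cards_eq0 -leqn0.
case: (set_0Vmem (DD z)) => [H0|[i Hi]]; first by apply: base_case.
have := Hi; rewrite !inE => /andP[/andP[iQ iU] Hzi].
set b := z i.
have Hxi : x i = ~~ b by move: Hzi; rewrite /b; case: (z i); case: (x i).
have [j [jU Hzj Hj]] : exists j, [/\ j \in UU, z j = ~~ b & (j \notin Q) || (x j == b)].
  apply/not_existsP => Hall.
  have Hsub : [set l in UU | z l == ~~ b] \subset [set l in Q :&: UU | x l == ~~ b] :\ i.
    apply/subsetP => l; rewrite !inE => /andP[lU /eqP Hzl].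
    have Hl : ~~ ((l \notin Q) || (x l == b)).
      by apply/negP => H; apply: (Hall l); split => //; rewrite inE.
    rewrite negb_or negbK in Hl; case/andP: Hl => lQ Hxl.
    rewrite lQ lU /=; apply/andP; split.
      by apply/negP => /eqP Eli; move: Hzl; rewrite Eli /b; case: (z i).
    by move: Hxl; case: (x l); case: (b).
  have := subset_leq_card Hsub.
  have := Hq (~~ b); rewrite /cntU /qq.
  have Hiin : i \in [set l in Q :&: UU | x l == ~~ b] by rewrite !inE iQ iU Hxi eqxx.
  rewrite (cardsD1 i [set l in Q :&: UU | x l == ~~ b]) Hiin.
  lia.
set t := tperm i j.
have piU : forall l, (l \in UU) = (pi l == None) by move=> l; rewrite inE.
have Hpt : forall l, pi (t l) = pi l.
  move=> l; rewrite /t; case: tpermP => [->|->|] //.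
    by move: iU jU; rewrite !piU => /eqP -> /eqP ->.
  by move: iU jU; rewrite !piU => /eqP -> /eqP ->.
have HUt : forall l, (t l \in UU) = (l \in UU) by move=> l; rewrite !piU Hpt.
pose z' := permc t z.
have E1 : f (ext pi z') = f (ext pi z).
  rewrite -[RHS](f_perm fsym t); congr f.
  by apply/ffunP => l; rewrite !ffunE Hpt.
rewrite -E1; apply: IH.
  have Hsub : DD z' \subset DD z :\ i.
    apply/subsetP => l; rewrite !inE ffunE => /andP[/andP[lQ lU] Hl].
    have [Eli|Hli] := eqVneq l i.
      by move: Hl; rewrite Eli /t tpermL Hzj Hxi eqxx.
    have [Elj|Hlj] := eqVneq l j.
      move: Hl; rewrite Elj /t tpermR -/b; move: Hj; rewrite -Elj lQ /= => /eqP ->.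
      by rewrite eqxx.
    move: Hl; rewrite /t tpermD 1?eq_sym // => Hl.
    by rewrite lQ lU Hl.
  have H1 := subset_leq_card Hsub.
  have H2 := cardsD1 i (DD z); rewrite Hi in H2.
  lia.
move=> bb; rewrite (leq_trans (Hq bb)) // /cntU.
rewrite -(card_preimset _ (@perm_inj _ t)); apply: subset_leq_card.
apply/subsetP => l; rewrite !inE ffunE => /andP[lU Hl].
by rewrite -Hpt lU Hl.
Qed.


Lemma bias_le :
  bias R (restrict f pi) * (2 ^ n)%N%:R <=
  (#|[set z : cube n | (cntU UU z true < qq true)%N]| +
   #|[set z : cube n | (cntU UU z false < qq false)%N]|)%N%:R.
Proof.
have Hb : bias R (restrict f pi) <= prob R (fun y => restrict f pi y != f x).
  rewrite /bias; case: (f x).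
    by rewrite ge_min lexx orbT.
  by rewrite ge_min lexx.
apply: (le_trans (ler_wpM2r _ Hb)); first by rewrite ler0n.
rewrite probE mulfVK ?pnatr_eq0 ?expn_eq0 // ler_nat.
apply: (@leq_trans #|[set z : cube n | (cntU UU z true < qq true)%N] :|:
   [set z : cube n | (cntU UU z false < qq false)%N]|); last by rewrite cardsU leq_subr.
apply: subset_leq_card; apply/subsetP => z; rewrite !inE => Hz.
apply: contraT; rewrite negb_or -!leqNgt => /andP[h1 h0].
have := swap_lemma (z := z); rewrite restrictE in Hz.
move=> H; rewrite H ?eqxx // in Hz.
by case.
Qed.

Lemma key_lemma (eps : R) : 0 < eps -> eps <= 1/2 -> eps < bias R (restrict f pi) ->
  #|UU|%:R <= 12 * ln (1/eps) * #|Q :&: UU|%:R.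
Proof.
move=> e0 e1 eb.
set d := #|Q :&: UU|.
have qd : forall b, (qq b <= d)%N.
  by move=> b; apply: subset_leq_card; apply/subsetP => i; rewrite inE => /andP[].
have B := bias_le.
have d1 : (1 <= d)%N.
  case: (posnP d) => // d0.
  have : bias R (restrict f pi) * (2 ^ n)%N%:R <= 0.
    apply: (le_trans B); rewrite (_ : (0:R) = 0%N%:R) // ler_nat leqn0 addn_eq0 !cards_eq0.
    apply/andP; split; apply/eqP/setP => z; rewrite !inE;
      by rewrite (leq_gtF (leq_trans (qd _) _)) // d0.
  have : 0 < bias R (restrict f pi) * (2 ^ n)%N%:R.
    by rewrite mulr_gt0 ?ltr0n ?expn_gt0 // (lt_trans e0 eb).
  lra.
apply: numeric => //.
have Hc : forall b, (#|[set z : cube n | (cntU UU z b < qq b)%N]|%:R : R) <=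
      2 ^+ d * (3/4) ^+ #|UU| * (2 ^ n)%N%:R.
  move=> b; apply: le_trans (chernoff _ _ _ d); rewrite ler_nat.
  apply: subset_leq_card; apply/subsetP => z; rewrite !inE => H.
  exact: (leq_trans H (qd b)).
have p0 : (0 : R) < (2 ^ n)%N%:R by rewrite ltr0n expn_gt0.
rewrite -(ltr_pM2r p0); apply: (lt_le_trans _ (le_trans B _)).
  by rewrite ltr_pM2r.
rewrite natrD (le_trans (lerD (Hc true) (Hc false))) //.
by rewrite le_eqVlt; apply/orP; left; apply/eqP; ring.
Qed.

End Key.


Section Alg.
Variables (R : realType) (n : nat) (f : cube n -> bool) (c : 'I_n -> R)
  (eps beta : R) (pick : selector R n).
Hypotheses (fsym : symmetric_fn f) (c0 : forall i, 0 <= c i) (e0 : 0 < eps)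
  (e1 : eps <= 1/2) (b0 : 0 < beta) (pickP : pick_ok f eps pick).

Definition NS (x : cube n) (s : state R n) (i : 'I_n) : state R n :=
  State [ffun j => if j == i then st_theta s j + beta else st_theta s j]
        (if c i <= st_theta s i + beta
         then [ffun j => if j == i then Some (x i) else st_pi s j] else st_pi s)
        (rcons (st_hist s) i).

Definition nextst (x : cube n) (s : state R n) : state R n :=
  if eps < bias R (restrict f (st_pi s)) then
    match pick (st_theta s) (st_pi s) (st_hist s) with
    | Some i => NS x s i
    | None => s end
  else s.

Fixpoint run (k : nat) (x : cube n) (s : state R n) : state R n :=
  match k with 0 => s | k'.+1 => run k' x (nextst x s) end.

Lemma nextst_halted x s : bias R (restrict f (st_pi s)) <= eps -> nextst x s = s.
Proof. by rewrite /nextst leNgt => /negbTE ->. Qed.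

Lemma run_halted k x s : bias R (restrict f (st_pi s)) <= eps -> run k x s = s.
Proof. by move=> H; elim: k => //= k IH; rewrite nextst_halted. Qed.

Lemma step_spec x s : (forall i, 0 <= st_theta s i) ->
  eps < bias R (restrict f (st_pi s)) ->
  exists i, [/\ pick (st_theta s) (st_pi s) (st_hist s) = Some i,
     st_pi s i = None,
     (forall j, st_pi s j = None -> st_theta s i <= st_theta s j) &
     nextst x s = NS x s i].
Proof.
move=> th0 eb.
have [i [Hp [Hi Hj]]] := pickP (st_hist s) th0 eb.
have Ni : st_pi s i = None.
  case E: (st_pi s i) => [b|] //.
  by move: Hi; rewrite (Inf_revealed _ _ E) ltxx.
exists i; split => //.
- move=> j Nj; have := Hj j; rewrite (Inf_sym R fsym Nj Ni).
  by rewrite ler_pM2l.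
- by rewrite /nextst eb Hp.
Qed.

Definition Inv (x : cube n) (s : state R n) (tv : 'I_n -> nat) : Prop :=
  [/\ forall i, st_theta s i = (tv i)%:R * beta,
      forall i, st_pi s i = None -> tv i = 0%N \/ st_theta s i < c i &
      forall i b, st_pi s i = Some b -> x i = b].

Definition tvS (tv : 'I_n -> nat) (i : 'I_n) : 'I_n -> nat :=
  fun j => (tv j + (j == i))%N.

Lemma Inv_th0 x s tv : Inv x s tv -> forall i, 0 <= st_theta s i.
Proof. by case=> H _ _ i; rewrite H mulr_ge0 // ltW. Qed.

Lemma Inv_step x s tv i : Inv x s tv -> st_pi s i = None ->
  Inv x (NS x s i) (tvS tv i).
Proof.
case=> Ht Hn Hc Ni; split => /=.
- move=> j; rewrite !ffunE Ht /tvS; case: eqP => _ /=; last by rewrite addn0.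
  by rewrite natrD mulrDl mul1r.
- move=> j; rewrite ffunE /tvS.
  case: ifP => Hci.
    rewrite ffunE; case: eqP => [//|_] /= Nj.
    by rewrite addn0; apply: Hn.
  move=> Nj; case: eqP => [Eji|_]; last by rewrite addn0; apply: Hn.
  right; rewrite Eji; move: Hci => /negbT; rewrite -ltNge.
  by [].
- move=> j b; case: ifP => _; last by apply: Hc.
  rewrite ffunE; case: eqP => [->|_]; [by case | by apply: Hc].
Qed.

Lemma Inv_init x : Inv x (init_state R n) (fun _ => 0%N).
Proof.
split => /= [i|i _|i b]; rewrite ?ffunE //; first by rewrite mul0r.
by left.
Qed.

Lemma Inv_next x s tv : Inv x s tv -> eps < bias R (restrict f (st_pi s)) ->
  exists i, [/\ pick (st_theta s) (st_pi s) (st_hist s) = Some i,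
     st_pi s i = None, (forall j, st_pi s j = None -> (tv i <= tv j)%N),
     nextst x s = NS x s i & Inv x (NS x s i) (tvS tv i)].
Proof.
move=> I eb; have [i [H1 H2 H3 H4]] := step_spec x (Inv_th0 I) eb.
exists i; split => //; last by apply: Inv_step.
move=> j Nj; have := H3 j Nj; case: I => Ht _ _; rewrite !Ht.
by rewrite ler_pM2r // ler_nat.
Qed.

Variable M : nat.
Hypothesis HM : forall i, c i < M%:R * beta.

Definition mu (s : state R n) (tv : 'I_n -> nat) : nat :=
  \sum_i (if st_pi s i == None then M - tv i else 0)%N.

Lemma tv_lt_M x s tv i : Inv x s tv -> st_pi s i = None -> (tv i < M)%N.
Proof.
case=> Ht Hn _ Ni; have := HM i; case: (Hn i Ni) => [->|].
  move=> H; rewrite lt0n; apply/negP => /eqP M0.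
  by move: H; rewrite M0 mul0r => H; have := c0 i; lra.
by rewrite Ht => H1 H2; have := lt_trans H1 H2; rewrite ltr_pM2r // ltr_nat.
Qed.

Lemma mu_step x s tv i : Inv x s tv -> st_pi s i = None ->
  (mu (NS x s i) (tvS tv i) < mu s tv)%N.
Proof.
move=> I Ni; have Hi := tv_lt_M I Ni.
rewrite /mu (bigD1 i) //= [X in (_ < X)%N](bigD1 i) //= Ni eqxx.
rewrite -addSn; apply: leq_add.
  rewrite /tvS eqxx /=; case: ifP => Hr; lia.
apply: leq_sum => j /negbTE Hji; rewrite /tvS Hji addn0 /=.
by case: (c i <= _ + _) => //=; rewrite ffunE Hji.
Qed.

Lemma run_halts k x s tv : Inv x s tv -> (mu s tv <= k)%N ->
  bias R (restrict f (st_pi (run k x s))) <= eps.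
Proof.
elim: k s tv => [|k IH] s tv I Hk.
  rewrite /=; rewrite leNgt; apply/negP => eb.
  have [i [_ Ni _ _ _]] := Inv_next I eb.
  by have := mu_step I Ni; rewrite leqn0 in Hk; rewrite (eqP Hk).
case: (leP (bias R (restrict f (st_pi s))) eps) => [hb|eb].
  by rewrite run_halted.
have [i [_ Ni _ E I']] := Inv_next I eb.
rewrite /= E; apply: (IH _ _ I').
by have := mu_step I Ni; lia.
Qed.

Lemma run_reach k x s tv : Inv x s tv ->
  iprr_reach f c eps beta pick x s (run k x s).
Proof.
elim: k s tv => [|k IH] s tv I; first by apply: IprrRefl.
case: (leP (bias R (restrict f (st_pi s))) eps) => [hb|eb].
  by rewrite run_halted //; apply: IprrRefl.
have [i [Hp Ni _ E I']] := Inv_next I eb.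
rewrite /= E; apply: IprrTrans (IH _ _ I').
exact: IprrStep.
Qed.

End Alg.


Section Err.
Variables (R : realType) (n : nat) (f : cube n -> bool) (c : 'I_n -> R)
  (eps beta : R) (pick : selector R n).
Hypotheses (fsym : symmetric_fn f) (c0 : forall i, 0 <= c i) (e0 : 0 < eps)
  (e1 : eps <= 1/2) (b0 : 0 < beta) (pickP : pick_ok f eps pick).

Lemma flipK (z : cube n) i : flip (flip z i) i = z.
Proof. by apply/ffunP => j; rewrite !ffunE; case: eqP => // _; rewrite negbK. Qed.

Lemma flip_inj i : injective (fun z : cube n => flip z i).
Proof. by move=> z1 z2 H; rewrite -(flipK z1 i) H flipK. Qed.

Lemma flipi (z : cube n) i : flip z i i = ~~ z i.
Proof. by rewrite ffunE eqxx. Qed.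

Lemma half_sum (Phi : cube n -> R) i b : (forall z, Phi (flip z i) = Phi z) ->
  \sum_(z : cube n | z i == b) Phi z = (\sum_z Phi z) / 2.
Proof.
move=> HP.
have E : \sum_(z : cube n | z i != b) Phi z = \sum_(z : cube n | z i == b) Phi z.
  rewrite (reindex_inj (@flip_inj i)) /=.
  by apply: eq_big => z; rewrite ?flipi ?HP //; case: (z i); case: (b).
rewrite [in RHS](bigID (fun z : cube n => z i == b)) /= E; field.
by [].
Qed.

Lemma card_cube : #|cube n| = (2 ^ n)%N.
Proof. by rewrite card_ffun card_bool card_ord. Qed.

Lemma halted_err (s : state R n) : bias R (restrict f (st_pi s)) <= eps ->
  \sum_z (if iprr_output f s != f (ext (st_pi s) z) then 1 else 0) <= eps * (2 ^ n)%N%:R.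
Proof.
move=> hb; set g := restrict f (st_pi s).
have N0 : (0 : R) < (2 ^ n)%N%:R by rewrite ltr0n expn_gt0.
set N := (2 ^ n)%N%:R in N0 *.
set a := (#|[set y | g y]|%:R : R).
set bb := (#|[set y | ~~ g y]|%:R : R).
have Hab : a + bb = N.
  rewrite /a /bb -natrD /N; congr _%:R.
  have -> : [set y | ~~ g y] = ~: [set y | g y] by apply/setP => y; rewrite !inE.
  by rewrite cardsC card_cube.
have Hp1 : prob R (fun y => g y != false) = a / N.
  by rewrite probE /a; congr (_%:R / _); apply: eq_card => y; rewrite !inE; case: (g y).
have Hp0 : prob R (fun y => g y != true) = bb / N.
  by rewrite probE /bb; congr (_%:R / _); apply: eq_card => y; rewrite !inE; case: (g y).
have Hpg : prob R g = a / N by rewrite probE.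
move: hb; rewrite /bias Hp1 Hp0 ge_min => hb.
rewrite /iprr_output -/g Hpg.
have Eo : forall o : bool, \sum_z (if o != f (ext (st_pi s) z) then 1 else 0 : R) =
    if o then bb else a.
  move=> o; rewrite -[RHS]/((if o then bb else a)) .
  transitivity (#|[set z | o != g z]|%:R : R).
    by rewrite card_sumR; apply: eq_bigr => z _; rewrite inE.
  by case: o; [rewrite /bb | rewrite /a]; congr _%:R; apply: eq_card => z; rewrite !inE;
    case: (g z).
rewrite Eo.
have a0 : 0 <= a by rewrite ler0n.
have bb0 : 0 <= bb by rewrite ler0n.
case: ifP => H.
  move: H hb; rewrite ler_pdivlMr // => H /orP[];
    rewrite ler_pdivrMr // => H2; nra.
move: H hb => /negbT; rewrite -ltNge ltr_pdivrMr // => H /orP[];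
  rewrite ler_pdivrMr // => H2; nra.
Qed.

Definition Hind (k : nat) (s : state R n) (y : cube n) : R :=
  if (bias R (restrict f (st_pi (run f c eps beta pick k y s))) <= eps) &&
     (iprr_output f (run f c eps beta pick k y s) != f y) then 1 else 0.

Lemma err_run k (s : state R n) : (forall i, 0 <= st_theta s i) ->
  \sum_z Hind k s (ext (st_pi s) z) <= eps * (2 ^ n)%N%:R.
Proof.
elim: k s => [|k IH] s th0.
  case: (leP (bias R (restrict f (st_pi s))) eps) => [hb|eb].
    apply: le_trans (halted_err hb); apply: ler_sum => z _.
    by rewrite /Hind /= hb /=.
  rewrite big1 ?mulr_ge0 ?ler0n ?ltW // => z _.
  by rewrite /Hind /= leNgt eb.
case: (leP (bias R (restrict f (st_pi s))) eps) => [hb|eb].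
  apply: le_trans (IH s th0); apply: ler_sum => z _.
  by rewrite /Hind /= nextst_halted.
have [i [Hp Ni Hmin E]] := step_spec c beta fsym pickP (ext (st_pi s) [ffun=> false]) th0 eb.
have En : forall y, nextst f c eps beta pick y s = NS c beta y s i.
  by move=> y; rewrite /nextst eb Hp.
have th1 : forall y, forall j, 0 <= st_theta (NS c beta y s i) j.
  move=> y j; rewrite /= ffunE; case: eqP => _; last by [].
  by rewrite addr_ge0 // ltW.
case Hr: (c i <= st_theta s i + beta).
  pose pib b := [ffun j => if j == i then Some b else st_pi s j].
  pose Sb b := State [ffun j => if j == i then st_theta s j + beta else st_theta s j]
        (pib b) (rcons (st_hist s) i).
  have ES : forall y, NS c beta y s i = Sb (y i) by move=> y; rewrite /NS Hr.
  have Ey : forall z, ext (st_pi s) z i = z i by move=> z; rewrite ffunE Ni.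
  have Eext : forall (z : cube n) b, z i = b -> ext (st_pi s) z = ext (pib b) z.
    move=> z b Hzb; apply/ffunP => j; rewrite !ffunE.
    by case: eqP => [->|_]; rewrite ?Ni ?Hzb.
  have th2 : forall b j, 0 <= st_theta (Sb b) j.
    by move=> b j; have := th1 [ffun=> b] j; rewrite ES ffunE.
  pose Phi b z := Hind k (Sb b) (ext (pib b) z).
  have Hflip : forall b z, Phi b (flip z i) = Phi b z.
    move=> b z; rewrite /Phi; congr Hind; apply/ffunP => j; rewrite !ffunE.
    by case: (j == i).
  have HPhi : forall b, \sum_z Phi b z <= eps * (2 ^ n)%N%:R.
    by move=> b; apply: (IH (Sb b) (th2 b)).
  rewrite (bigID (fun z : cube n => z i == true)) /=.
  have -> : \sum_(z : cube n | z i == true) Hind k.+1 s (ext (st_pi s) z) = \sum_(z : cube n | z i == true) Phi true z.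
    apply: eq_bigr => z /eqP Hz; by rewrite /Hind /= En ES Ey Hz /Phi /Hind (Eext z true Hz).
  have -> : \sum_(z : cube n | z i != true) Hind k.+1 s (ext (st_pi s) z) = \sum_(z : cube n | z i == false) Phi false z.
    apply: eq_big => [z|z]; first by case: (z i).
    move=> Hz; have Hz' : z i = false by move: Hz; case: (z i).
    by rewrite /Hind /= En ES Ey Hz' /Phi /Hind (Eext z false Hz').
  rewrite !half_sum //.
  have := HPhi true; have := HPhi false; lra.
pose S0 := State [ffun j => if j == i then st_theta s j + beta else st_theta s j]
        (st_pi s) (rcons (st_hist s) i).
have ES : forall y, NS c beta y s i = S0 by move=> y; rewrite /NS Hr.
have th2 : forall j, 0 <= st_theta S0 j.
  by move=> j; have := th1 [ffun=> false] j; rewrite ES.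
apply: le_trans (IH S0 th2); apply: ler_sum => z _.
by rewrite /Hind /= En ES.
Qed.

End Err.


Lemma card_sum_nat (T : finType) (P : pred T) : #|[set i | P i]| = (\sum_i nat_of_bool (P i))%N.
Proof.
rewrite -sum1_card big_mkcond /=; apply: eq_bigr => i _; rewrite inE.
by case: (P i).
Qed.

Lemma sum_lt_min (J t : nat) : (\sum_(j < J) nat_of_bool (j < t)%N)%N = minn t J.
Proof.
elim: J => [|J IH]; first by rewrite big_ord0 minn0.
rewrite big_ord_recr /= IH; case: (ltnP J t) => H; lia.
Qed.

Lemma sum_step (R : realType) (beta cc : R) (T : nat) : 0 < beta -> 0 <= cc ->
  \sum_(j < T) beta * (if (j.+1)%:R * beta < cc then 1 else 0) <= cc.
Proof.
move=> b0 cc0; elim: T => [|T IH]; first by rewrite big_ord0.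
rewrite big_ord_recr /=; case: ifP => H; last by rewrite mulr0 addr0.
have : \sum_(j < T) beta * (if (j.+1)%:R * beta < cc then 1 else 0) <= T%:R * beta.
  apply: le_trans (_ : \sum_(j < T) beta <= _).
    apply: ler_sum => j _; case: ifP => _; rewrite ?mulr1 ?mulr0 //; lra.
  by rewrite sumr_const card_ord mulr_natl.
move: H; rewrite -addn1 natrD; lra.
Qed.

Section Tree.
Variables (R : realType) (n : nat) (c : 'I_n -> R).
Hypothesis c0 : forall i, 0 <= c i.

Lemma tree_cert (t : dtree n) (x : cube n) : exists Q : {set 'I_n},
  \sum_(i in Q) c i <= dt_cost c t x /\
  forall y : cube n, (forall i, i \in Q -> y i = x i) -> dt_eval t y = dt_eval t x.
Proof.
elim: t => [b|i t0 IH0 t1 IH1].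
  by exists set0; rewrite big_set0; split.
have [Q [H1 H2]] : exists Q : {set 'I_n},
  \sum_(i in Q) c i <= (if x i then dt_cost c t1 x else dt_cost c t0 x) /\
  forall y : cube n, (forall i, i \in Q -> y i = x i) ->
    (if x i then dt_eval t1 y else dt_eval t0 y) = (if x i then dt_eval t1 x else dt_eval t0 x).
  by case: (x i); [apply: IH1 | apply: IH0].
exists (i |: Q); split.
  rewrite /=; case: (boolP (i \in Q)) => iQ.
    have -> : i |: Q = Q by apply/setP => j; rewrite !inE; case: eqP => // ->.
    by rewrite (le_trans H1) // lerDr.
  by rewrite big_setU1 //= lerD2l.
move=> y Hy /=; rewrite (Hy i) ?setU11 //.
by apply: H2 => j jQ; apply: Hy; rewrite setU1r.
Qed.

Definition setc (y : cube n) (i : 'I_n) (b : bool) : cube n :=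
  [ffun j => if j == i then b else y j].

Fixpoint bt (l : seq 'I_n) (g : cube n -> bool) : dtree n :=
  match l with
  | [::] => Leaf n (g [ffun=> false])
  | i :: l' => Query i (bt l' (fun y => g (setc y i false))) (bt l' (fun y => g (setc y i true)))
  end.

Lemma bt_eval l : forall g : cube n -> bool, (forall y y' : cube n, (forall j, j \in l -> y j = y' j) -> g y = g y') ->
  forall x, dt_eval (bt l g) x = g x.
Proof.
elim: l => [|i l IH] g Hg x /=; first by apply: Hg.
have Hgb : forall b (y y' : cube n), (forall j, j \in l -> y j = y' j) ->
    g (setc y i b) = g (setc y' i b).
  move=> b y y' H; apply: Hg => j; rewrite inE => /orP[/eqP->|jl].
    by rewrite !ffunE eqxx.
  by rewrite !ffunE; case: eqP => // _; apply: H.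
have Ex : forall b, x i = b -> setc x i b = x.
  by move=> b <-; apply/ffunP => j; rewrite ffunE; case: eqP => // ->.
case Exi: (x i).
  by rewrite (IH _ (Hgb true)) Ex.
by rewrite (IH _ (Hgb false)) Ex.
Qed.

End Tree.


Lemma aux_ind (X : bool) t j : (nat_of_bool (j < t + 1) + nat_of_bool (X && (t + 1 <= j)) <=
   nat_of_bool (j < t) + nat_of_bool (t <= j))%N.
Proof.
rewrite addn1 ltnS; case: (leqP j t) => h1; case: (ltnP j t) => h2; case: X => //=; lia.
Qed.

Section Cost.
Variables (R : realType) (n : nat) (f : cube n -> bool) (c : 'I_n -> R)
  (eps beta : R) (pick : selector R n).
Hypotheses (fsym : symmetric_fn f) (c0 : forall i, 0 <= c i) (e0 : 0 < eps)
  (e1 : eps <= 1/2) (b0 : 0 < beta) (pickP : pick_ok f eps pick).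
Variables (x : cube n) (Q : {set 'I_n}).
Hypothesis Hcert : forall y : cube n, (forall i, i \in Q -> y i = x i) -> f y = f x.

Definition Aj (s : state R n) (tv : 'I_n -> nat) (j : nat) : nat :=
  (#|[set i | (j < tv i)%N]| + #|[set i | (st_pi s i == None) && (tv i <= j)%N]|)%N.
Definition qj (j : nat) : nat := #|[set i in Q | j%:R * beta < c i]|.
Definition InvC (s : state R n) (tv : 'I_n -> nat) : Prop :=
  Inv c beta x s tv /\ forall j, (1 <= j)%N -> (exists i, (j < tv i)%N) ->
    (Aj s tv j)%:R <= 12 * ln (1/eps) * (qj j)%:R.

Lemma L0 : 0 <= ln (1/eps).
Proof. rewrite ln_ge0 // ler_pdivlMr // mul1r (le_trans e1) //; lra. Qed.

Lemma Aj_step s tv i j : st_pi s i = None ->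
  (Aj (NS c beta x s i) (tvS tv i) j <= Aj s tv j)%N.
Proof.
move=> Ni; rewrite /Aj !card_sum_nat -!big_split /=; apply: leq_sum => l _.
rewrite /tvS; case: (eqVneq l i) => [->|Hli].
  by rewrite Ni eqxx /=; apply: aux_ind.
rewrite addn0.
have -> : (if (c i <= st_theta s i + beta)%R
     then [ffun j0 => if j0 == i then Some (x i) else st_pi s j0]
     else st_pi s) l = st_pi s l.
  by case: ifP => _ //; rewrite ffunE (negbTE Hli).
by [].
Qed.

Lemma InvC_step s tv : InvC s tv -> eps < bias R (restrict f (st_pi s)) ->
  exists i, nextst f c eps beta pick x s = NS c beta x s i /\ InvC (NS c beta x s i) (tvS tv i).
Proof.
move=> [I HA] eb.
have [i [Hp Ni Hmin E I']] := Inv_next fsym b0 pickP I eb.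
exists i; split => //; split => // j j1 Hex.
apply: le_trans (_ : (Aj s tv j)%:R <= _); first by rewrite ler_nat Aj_step.
case: (boolP [exists l, (j < tv l)%N]) => [/existsP Hl|].
  by apply: HA.
rewrite negb_exists => /forallP Hall.
have Hall' : forall l, (tv l <= j)%N by move=> l; have := Hall l; rewrite -leqNgt.
have tvi : tv i = j.
  case: Hex => l; rewrite /tvS; case: (eqVneq l i) => [->|Hli] /=.
    by have := Hall' i; lia.
  by rewrite addn0 => H; have := Hall' l; lia.
have E0 : #|[set l | (j < tv l)%N]| = 0%N.
  by apply/eqP; rewrite cards_eq0; apply/eqP/setP => l; rewrite !inE ltnNge Hall'.
case: I => Ht Hn Hc.
have K := key_lemma fsym Hc Hcert e0 e1 eb.
rewrite /Aj E0 add0n.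
apply: le_trans (_ : #|UU (st_pi s)|%:R <= _).
  rewrite ler_nat; apply: subset_leq_card; apply/subsetP => l; rewrite !inE.
  by case/andP.
apply: (le_trans K); apply: ler_wpM2l; first by rewrite mulr_ge0 ?L0.
rewrite ler_nat; apply: subset_leq_card; apply/subsetP => l; rewrite !inE.
case/andP => lQ /eqP Nl; rewrite lQ /=.
have := Hmin l Nl; rewrite tvi => jl.
case: (Hn l Nl) => [tl0|]; first by lia.
by rewrite Ht; apply: le_lt_trans; rewrite ler_pM2r // ler_nat.
Qed.

Lemma run_InvC k s tv : InvC s tv -> exists tv', InvC (run f c eps beta pick k x s) tv'.
Proof.
elim: k s tv => [|k IH] s tv I; first by exists tv.
case: (leP (bias R (restrict f (st_pi s))) eps) => [hb|eb].
  by rewrite run_halted //; exists tv.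
have [i [E I']] := InvC_step I eb.
by rewrite /= E; apply: (IH _ _ I').
Qed.

Lemma cost_bound s tv : InvC s tv ->
  iprr_cost s <= beta * n%:R + 12 * ln (1/eps) * \sum_(i in Q) c i.
Proof.
move=> [[Ht Hn Hc] HA].
set L := ln (1/eps).
have LL : 0 <= L by apply: L0.
have -> : iprr_cost s = beta * (\sum_i tv i)%N%:R.
  rewrite /iprr_cost natr_sum mulr_sumr; apply: eq_bigr => i _.
  by rewrite Ht mulrC.
set T := (\sum_i tv i)%N.
have ET : T = (\sum_(j < T.+1) #|[set i | (j < tv i)%N]|)%N.
  transitivity (\sum_i \sum_(j < T.+1) nat_of_bool (j < tv i)%N)%N.
    rewrite {1}/T; apply: eq_bigr => i _; rewrite sum_lt_min; apply/esym/minn_idPl.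
    by apply: leqW; rewrite /T (bigD1 i) //=; apply: leq_addr.
  rewrite exchange_big /=; apply: eq_bigr => j _.
  by rewrite card_sum_nat.
rewrite ET big_ord_recl /= natrD mulrDr.
apply: lerD.
  apply: ler_wpM2l; first exact: ltW.
  rewrite ler_nat.
  by rewrite -[X in (_ <= X)%N](card_ord n) max_card.
have Hq : forall j : nat, ((qj j)%:R : R) = \sum_(i in Q) (if j%:R * beta < c i then 1 else 0).
  move=> j; rewrite /qj card_sumR [RHS]big_mkcond /=; apply: eq_bigr => i _.
  by rewrite inE; case: (i \in Q).
apply: le_trans (_ : beta * \sum_(j < T) (12 * L * (qj j.+1)%:R) <= _).
  apply: ler_wpM2l; first exact: ltW.
  rewrite natr_sum; apply: ler_sum => j _.
  case: (boolP [exists l, (j.+1 < tv l)%N]) => [/existsP Hl|].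
    apply: le_trans (HA j.+1 erefl Hl); rewrite ler_nat /Aj; apply: leq_addr.
  rewrite negb_exists => /forallP Hall.
  have -> : #|[set i | (bump 0 j < tv i)%N]| = 0%N.
    apply/eqP; rewrite cards_eq0; apply/eqP/setP => l; rewrite !inE.
    by have := Hall l; rewrite /bump /=; case: (_ < _)%N.
  by rewrite mulr_ge0 ?mulr_ge0 ?ler0n.
rewrite (eq_bigr (fun j : 'I_T => 12 * L * \sum_(i in Q) (if (j.+1)%:R * beta < c i then 1 else 0))); last first.
  by move=> j _; rewrite (Hq j.+1).
rewrite -mulr_sumr exchange_big /= mulrCA.
apply: ler_wpM2l; first by rewrite mulr_ge0.
rewrite mulr_sumr; apply: ler_sum => i _; rewrite mulr_sumr.
exact: (sum_step T b0 (c0 i)).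
Qed.

End Cost.


Unset Implicit Arguments.

Theorem mainTheorem6 :
  exists C : nat,
  forall (R : realType) (n : nat) (f : cube n -> bool) (c : 'I_n -> R)
         (eps beta : R) (pick : selector R n),
    symmetric_fn f ->
    (forall i, 0 <= c i) ->
    0 < eps -> eps <= 1 / 2 -> 0 < beta ->
    pick_ok f eps pick ->
    exists F : cube n -> state R n,
      (forall x, iprr_reach f c eps beta pick x (init_state R n) (F x) /\ halted f eps (F x)) /\
      prob R (fun x => iprr_output f (F x) != f x) <= eps /\
      avg (fun x => iprr_cost (F x)) <=
        beta * n%:R + opt_avg_0 f c * (C%:R * ln (1 / eps)).
Proof.
exists 12%N => R n f c eps beta pick fsym c0 e0 e1 b0 pickP.
set M := Num.Def.archi_bound (\sum_i c i / beta).
have HM : forall i, c i < M%:R * beta.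
  move=> i; have Hs : 0 <= \sum_i c i / beta.
    by apply: sumr_ge0 => j _; exact: divr_ge0 (c0 j) (ltW b0).
  have H := @archi_boundP R (\sum_i c i / beta) Hs.
  rewrite -/M in H; rewrite -ltr_pdivrMr //; apply: le_lt_trans H.
  rewrite (bigD1 i) //= lerDl; apply: sumr_ge0 => j _; exact: divr_ge0 (c0 j) (ltW b0).
set K := (n * M)%N.
pose F x := run f c eps beta pick K x (init_state R n).
have Hmu : (mu M (init_state R n) (fun _ => 0%N) <= K)%N.
  rewrite /mu /K; apply: (@leq_trans (\sum_(i : 'I_n) M)).
    by apply: leq_sum => i _; rewrite ffunE /= subn0.
  by rewrite sum_nat_const card_ord.
have Hhalt : forall x, bias R (restrict f (st_pi (F x))) <= eps.
  by move=> x; apply: (run_halts fsym c0 e0 e1 b0 pickP HM (Inv_init c beta x) Hmu).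
have N0 : (0 : R) < (2 ^ n)%N%:R by rewrite ltr0n expn_gt0.
have ie : 1 < 1 / eps by rewrite ltr_pdivlMr // mul1r; lra.
have L0 : 0 < ln (1 / eps) by apply: ln_gt0.
exists F; split; [|split].
- move=> x; split; last by apply: Hhalt.
  exact: (run_reach fsym b0 pickP K (Inv_init c beta x)).
- rewrite probE ler_pdivrMr //.
  have th0 : forall i, 0 <= st_theta (init_state R n) i by move=> i; rewrite ffunE.
  apply: le_trans (err_run c fsym e0 b0 pickP K th0).
  rewrite card_sumR le_eqVlt; apply/orP; left; apply/eqP; apply: eq_bigr => z _.
  have -> : ext (st_pi (init_state R n)) z = z by apply/ffunP => i; rewrite !ffunE.
  by rewrite inE /Hind -/(F z) Hhalt.
set a := avg (fun x => iprr_cost (F x)).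
have Hb : forall t, (forall x, dt_eval t x = f x) ->
    a <= beta * n%:R + 12 * ln (1/eps) * avg (dt_cost c t).
  move=> t Ht.
  have Hp : forall x, iprr_cost (F x) <= beta * n%:R + 12 * ln (1/eps) * dt_cost c t x.
    move=> x; have [Q [H1 H2]] := tree_cert c0 t x.
    have Hcert : forall y : cube n, (forall i, i \in Q -> y i = x i) -> f y = f x.
      by move=> y Hy; rewrite -!Ht; apply: H2.
    have I0 : InvC c eps beta x Q (init_state R n) (fun _ => 0%N).
      by split; [apply: Inv_init | move=> j _ [i]].
    have [tv' I'] := run_InvC fsym e0 e1 b0 pickP Hcert K I0.
    apply: le_trans (cost_bound c0 e0 e1 b0 I') _.
    by rewrite lerD2l ler_wpM2l // mulr_ge0 // ltW.
  rewrite /a /avg ler_pdivrMr //.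
  apply: le_trans (_ : \sum_x (beta * n%:R + 12 * ln (1/eps) * dt_cost c t x) <= _).
    by apply: ler_sum => x _; apply: Hp.
  rewrite big_split /= sumr_const card_cube -mulr_sumr -mulr_natr /avg.
  have NN : (2 ^ n)%N%:R != 0 :> R by apply: lt0r_neq0.
  by rewrite le_eqVlt; apply/orP; left; apply/eqP; field.
have ne : ([set r : R | exists t : dtree n,
          (forall x, dt_eval t x = f x) /\ r = avg (dt_cost c t)] !=set0)%classic.
  exists (avg (dt_cost c (bt (enum 'I_n) f))), (bt (enum 'I_n) f); split => //.
  apply: bt_eval => y y' Hy; congr f; apply/ffunP => j; apply: Hy.
  by rewrite mem_enum.
have lb : lbound [set r : R | exists t : dtree n,
          (forall x, dt_eval t x = f x) /\ r = avg (dt_cost c t)] ((a - beta * n%:R) / (12 * ln (1/eps))).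
  move=> r [t [Ht ->]]; rewrite ler_pdivrMr ?mulr_gt0 //.
  by have := Hb t Ht; lra.
have := lb_le_inf ne lb; rewrite -/(opt_avg_0 f c) ler_pdivrMr ?mulr_gt0 // => H.
lra.
Qed.
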